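(* Consider an instance of $P|G=\textit{block graph}|C_{\max}$ with $m$ identical machines, jobs $J=\{J_1,\dots,J_n\}$ with processing times $p_j\in\mathbb{N}$, and block conflict graph $G$ with $\omega(G)\le m$ and with $k$ blocks $B_1,\dots,B_k$ listed in the greedy order described in the context. Run the greedy algorithm described in the context. For $j\in\{0,\dots,k\}$ and each machine $M_i$, let $C_j(M_i)$ be the load of $M_i$ after the first $j$ blocks have been processed, let $C_j=\frac1m\sum_{i=1}^m C_j(M_i)$, and let $p_{\max}=\max_l p_l$. Then for every $i\in\{1,\dots,m\}$ and every $j\in\{0,\dots,k\}$, $$C_j(M_i)\le C_j+\max\{C_j,p_{\max}\}.$$
   Context: Scheduling with a conflict graph: jobs $J=\{J_1,\dots,J_n\}$, machines $M=\{M_1,\dots,M_m\}$, and a conflict graph $G=(J,E)$; a schedule is a map $\sigma:J\to M$ such that adjacent jobs are assigned to different machines. On identical machines ($P$) job $J_j$ has processing time $p_j$ on every machine; the load of a machine is the sum of processing times of jobs assigned to it; the makespan $C_{\max}(\sigma)$ is the maximum load, and $C^{OPT}_{\max}$ is the minimum makespan over all schedules. A block graph is a graph in which every maximal 2-connected component is a clique; a block is a maximal clique; a cut-vertex is a vertex in at least two blocks. The block-cut forest $T_G$ has a node for each block and each cut-vertex, with a block node adjacent to a cut-vertex node iff the cut-vertex lies in the block; each component is rooted arbitrarily. Greedy algorithm: list the blocks in the order of a pre-order traversal of (each component of) the rooted block-cut forest. Process the blocks in this order. For the current block $B$, let $L_J$ be the jobs of $B$ sorted by non-increasing processing time and let $L_M$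 be the $|B|$ machines of smallest current load, sorted by non-decreasing current load (ties broken arbitrarily). If $B$ has a parent cut-vertex $u$ in $T_G$ that has already been assigned to some machine $M'$, then: if $M'\in L_M$ remove $M'$ from $L_M$, otherwise remove the last machine of $L_M$; and remove $u$ from $L_J$. Then assign the $i$-th job of $L_J$ to the $i$-th machine of $L_M$ for $i=1,\dots,|L_M|$, updating loads. *)

(* Defs.v *)
From mathcomp Require Import all_boot all_order all_algebra.
Set Implicit Arguments.
Unset Strict Implicit.
Unset Printing Implicit Defensive.
Import Order.TTheory GRing.Theory Num.Theory.

Section BlockGraphScheduling.

Variable n m : nat.
Variable e : rel 'I_n.

Definition clique (S : {set 'I_n}) : bool :=
  [forall x in S, forall y in S, (x != y) ==> e x y].

Definition connected_on (S : {set 'I_n}) : Prop :=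
  forall x y, x \in S -> y \in S ->
    connect (fun a b => [&& a \in S, b \in S & e a b]) x y.

Definition nonsep (S : {set 'I_n}) : Prop :=
  S != set0 /\ connected_on S /\ (forall v, v \in S -> connected_on (S :\ v)).

Definition maxnonsep (S : {set 'I_n}) : Prop :=
  nonsep S /\ (forall S' : {set 'I_n}, S \subset S' -> nonsep S' -> S' = S).

Definition block_graph : Prop := forall S, maxnonsep S -> clique S.

Definition block (B : {set 'I_n}) : bool :=
  [&& clique B, B != set0 & [forall S : {set 'I_n}, (B \proper S) ==> ~~ clique S]].

Definition cutv (v : 'I_n) : bool :=
  1 < #|[set B : {set 'I_n} | block B && (v \in B)]|.

(* Nodes of the block-cut forest: inl B for a block, inr v for a cut-vertex. *)
Definition bcnode := ({set 'I_n} + 'I_n)%type.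

Definition bc_valid (x : bcnode) : bool :=
  match x with inl B => block B | inr v => cutv v end.

Definition bc_adj (x y : bcnode) : bool :=
  match x, y with
  | inl B, inr v => v \in B
  | inr v, inl B => v \in B
  | _, _ => false
  end.

(* par is a rooting of the block-cut forest T_G (each component rooted
   arbitrarily): par x = Some y means y is the parent of x. Every tree edge is
   a parent edge, parent edges are tree edges, and there are no cycles. *)
Definition rooting (par : bcnode -> option bcnode) : Prop :=
  [/\ (forall x y, par x = Some y -> [&& bc_valid x, bc_valid y & bc_adj x y]),
      (forall x y, bc_valid x -> bc_valid y -> bc_adj x y ->
         par x = Some y \/ par y = Some x)
    & exists h : bcnode -> nat, forall x y, par x = Some y -> h y < h x].

Definition descendant (par : bcnode -> option bcnode) (x y : bcnode) : Prop :=
  exists t, iter t (fun o => obind par o) (Some y) = Some x.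

(* s is a pre-order traversal of the rooted forest: it lists every node exactly
   once, and the subtree of every node x occupies a contiguous segment of s
   starting at x. *)
Definition preorder (par : bcnode -> option bcnode) (s : seq bcnode) : Prop :=
  [/\ uniq s,
      (forall x, (x \in s) = bc_valid x)
    & forall x, x \in s ->
        (forall j, j < size s -> descendant par x (nth x s j) -> index x s <= j)
        /\ (forall i j l, i <= j -> j <= l -> l < size s ->
              descendant par x (nth x s i) -> descendant par x (nth x s l) ->
              descendant par x (nth x s j))].

Definition block_order (s : seq bcnode) : seq {set 'I_n} :=
  pmap (fun x => if x is inl B then Some B else None) s.

Definition parent_cv (par : bcnode -> option bcnode) (B : {set 'I_n}) : option 'I_n :=
  match par (inl B) with Some (inr u) => Some u | _ => None end.

Variable p : 'I_n -> nat.

(* partial schedule: job -> (assigned machine) *)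
Definition load (a : {ffun 'I_n -> option 'I_m}) (i : 'I_m) : nat :=
  \sum_(l < n | a l == Some i) p l.

(* One step of the greedy algorithm on block B with parent cut-vertex pu,
   from partial schedule a to a' (ties broken arbitrarily). *)
Definition greedy_step (a a' : {ffun 'I_n -> option 'I_m})
    (B : {set 'I_n}) (pu : option 'I_n) : Prop :=
  exists (LJ : seq 'I_n) (LM : seq 'I_m),
    [/\ perm_eq LJ (enum B),
        sorted (fun x y => p y <= p x) LJ,
        [/\ uniq LM, size LM = #|B| &
        (forall i j, i \in LM -> j \notin LM -> load a i <= load a j)],
        sorted (fun i j => load a i <= load a j) LM
      & (let LJM :=
          match pu with
          | Some u =>
              match a u with
              | Some M' => (rem u LJ,
                            if M' \in LM then rem M' LM
                            else take (size LM).-1 LM)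
              | None => (LJ, LM)
              end
          | None => (LJ, LM)
          end in
        a' = [ffun l => if l \in take (size LJM.2) LJM.1
                        then nth None (map Some LJM.2) (index l LJM.1)
                        else a l])].

Definition greedy_run (par : bcnode -> option bcnode) (s : seq bcnode)
    (st : nat -> {ffun 'I_n -> option 'I_m}) : Prop :=
  st 0 = [ffun => None] /\
  forall j, j < size (block_order s) ->
    greedy_step (st j) (st j.+1) (nth set0 (block_order s) j)
      (parent_cv par (nth set0 (block_order s) j)).

End BlockGraphScheduling.

(* Main.v *)
Require Import Defs.
From mathcomp Require Import all_boot all_order all_algebra.
From mathcomp Require Import zify.
Import Order.TTheory GRing.Theory Num.Theory.
Lemma load_step n m (p : 'I_n -> nat) (a : {ffun 'I_n -> option 'I_m})
    (LJ : seq 'I_n) (LM : seq 'I_m) (k : 'I_m) :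
  uniq LJ -> uniq LM -> (size LM <= size LJ)%N ->
  (forall l, l \in LJ -> a l = None) ->
  load p [ffun l => if l \in take (size LM) LJ
                    then nth None (map Some LM) (index l LJ) else a l] k
  = (load p a k + (if k \in LM then nth 0 (map p LJ) (index k LM) else 0))%N.
Proof.
move=> uJ uM sz fresh.
rewrite /load (bigID (fun l => l \in take (size LM) LJ)) /=.
rewrite [X in (_ = X + _)%N](bigID (fun l => l \in take (size LM) LJ)) /=.
rewrite [X in (_ = X + _ + _)%N]big1; last first.
  by move=> l /andP[/eqP al lt]; move: al; rewrite fresh // (mem_take lt).
rewrite add0n [in RHS]addnC; congr (_ + _)%N; last first.
  by apply: eq_bigl => l; rewrite ffunE; case: (l \in take _ _); rewrite ?andbF.
case: (boolP (k \in LM)) => kM; last first.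
  apply: big_pred0 => l; rewrite ffunE; case lt: (l \in take _ _); rewrite ?andbF //.
  rewrite andbT; have il := index_ltn lt.
  rewrite (nth_map k) //; apply/negP => /eqP [e]; move: kM; rewrite -e mem_nth //.
have ikM : (index k LM < size LM)%N by rewrite index_mem.
have ikJ : (index k LM < size LJ)%N by exact: leq_trans ikM sz.
have [l0 _] : exists l0 : 'I_n, true by case: (LJ) ikJ => [//|l0 ?] _; exists l0.
rewrite (nth_map l0) //.
apply: (big_pred1 (nth l0 LJ (index k LM))) => l /=; rewrite ffunE.
case lt: (l \in take _ _); rewrite ?andbF ?andbT.
  have lJ := mem_take lt; have il := index_ltn lt.
  rewrite (nth_map k) //.
  apply/eqP/eqP => [[e]|->].
    have e' : nth k LM (index l LJ) = nth k LM (index k LM) by rewrite nth_index.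
    by move/eqP: e'; rewrite nth_uniq // => /eqP <-; rewrite nth_index.
  by rewrite index_uniq // nth_index.
apply/esym/negbTE; apply: contraFN lt => /eqP ->.
by rewrite in_take_leq // index_uniq.
Qed.
Definition Inv (m P : nat) (lam : 'I_m -> nat) : Prop :=
  forall i (S : {set 'I_m}), i \notin S ->
    (#|S|.-1 * lam i <= \sum_(k in S) lam k + #|S|.-1 * P)%N.
Arguments Inv {m}.

Lemma arith_fin (u h a L x P sig12 sig : nat) :
  (u <= a + 1)%N -> (x <= P)%N -> (a <= u)%N ->
  (u.-1 * L <= sig12 + u.-1 * P)%N ->
  (sig12 + a * x + h * L <= sig)%N ->
  ((u + h).-1 * (L + x) <= sig + (u + h).-1 * P)%N.
Proof.
case: u => [|u] /= Hua HxP Hau IH Hs.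
  case: h Hs => [|h] //= Hs.
  rewrite mulnDr; nia.
rewrite ?addSn /=.
have h1 : (u * x <= a * x)%N by apply: leq_mul; lia.
have h2 : (h * x <= h * P)%N by apply: leq_mul.
nia.
Qed.

Lemma inv_step (m P : nat) (lam lam' x : 'I_m -> nat) (LM : seq 'I_m) (zo : option 'I_m) :
  (forall k k', k \in LM -> k' \in LM -> (index k LM <= index k' LM)%N -> (lam k <= lam k')%N) ->
  (forall k, k \notin LM -> lam' k = lam k) ->
  (forall k, k \in LM -> lam' k = lam k + x k) ->
  (forall k, k \in LM -> (x k <= P)%N) ->
  (forall k k', k \in LM -> k' \in LM -> (index k LM <= index k' LM)%N -> (x k' <= x k)%N) ->
  (forall k k', k \in LM -> k' \notin LM -> Some k' != zo -> (lam k <= lam k')%N) ->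
  Inv P lam -> Inv P lam'.
Proof.
move=> Hsort Hout Hin HxP Hxmon Hz IH i S iS.
have lamle : forall k, (lam k <= lam' k)%N.
  move=> k; case: (boolP (k \in LM)) => kL; first by rewrite Hin // leq_addr.
  by rewrite Hout.
case: (boolP (i \in LM)) => iL; last first.
  rewrite Hout //; apply: leq_trans (IH i S iS) _.
  by rewrite leq_add2r; apply: leq_sum => k _.
set t := index i LM.
pose c1 := fun k => (k \in LM) && (index k LM < t)%N.
pose c := fun k => c1 k || (lam k < lam i)%N.
pose T12 := [set k in S | c k].
pose T3 := [set k in S | ~~ c k].
pose A1 := [set k in T12 | c1 k].
pose A2 := [set k in T12 | ~~ c1 k].
have cardS : #|S| = (#|T12| + #|T3|)%N.
  rewrite -(cardID [set k | c k] S); congr (_ + _)%N; apply: eq_card => k;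
  by rewrite /T12 /T3 !inE // andbC.
have cardT12 : #|T12| = (#|A1| + #|A2|)%N.
  rewrite -(cardID [set k | c1 k] T12); congr (_ + _)%N; apply: eq_card => k;
  by rewrite /A1 /A2 !inE // andbC.
have cardA2 : (#|A2| <= 1)%N.
  apply/card_le1_eqP => k1 k2; rewrite /A2 /T12 !inE /c /c1.
  have key : forall k, k \in S -> ~~ ((k \in LM) && (index k LM < t)%N) ->
      (lam k < lam i)%N -> Some k = zo.
    move=> k _ nc lt; case: (boolP (k \in LM)) => kL.
      move: nc; rewrite kL /= -leqNgt => tk.
      by move: lt; rewrite ltnNge (Hsort i k iL kL tk).
    apply/eqP; apply: contraTT lt => nz; rewrite -leqNgt; exact: Hz.
  move=> /andP[/andP[k1S /orP[->//|lt1]] n1] /andP[/andP[k2S /orP[->//|lt2]] n2].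
  by move: (key _ k1S n1 lt1); rewrite -(key _ k2S n2 lt2) => -[].
have sumS : (\sum_(k in S) lam' k = \sum_(k in T12) lam' k + \sum_(k in T3) lam' k)%N.
  rewrite (bigID c) /=; congr (_ + _)%N; apply: eq_bigl => k; by rewrite /T12 /T3 !inE.
have sumT12 : (\sum_(k in T12) lam' k = \sum_(k in A1) lam' k + \sum_(k in A2) lam' k)%N.
  rewrite (bigID c1) /=; congr (_ + _)%N; apply: eq_bigl => k; by rewrite /A1 /A2 !inE.
have sumT12' : (\sum_(k in T12) lam k = \sum_(k in A1) lam k + \sum_(k in A2) lam k)%N.
  rewrite (bigID c1) /=; congr (_ + _)%N; apply: eq_bigl => k; by rewrite /A1 /A2 !inE.
have bA1 : (\sum_(k in A1) lam k + #|A1| * x i <= \sum_(k in A1) lam' k)%N.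
  rewrite -sum_nat_const -big_split /=; apply: leq_sum => k.
  rewrite /A1 !inE /c1 => /andP[_ /andP[kL kt]].
  rewrite Hin // leq_add2l; apply: Hxmon => //; exact: ltnW.
have bA2 : (\sum_(k in A2) lam k <= \sum_(k in A2) lam' k)%N by apply: leq_sum.
have bT3 : (#|T3| * lam i <= \sum_(k in T3) lam' k)%N.
  rewrite -sum_nat_const; apply: leq_sum => k; rewrite /T3 !inE /c negb_or -leqNgt.
  move=> /andP[_ /andP[_ le]]; exact: leq_trans le (lamle k).
have IH12 := IH i T12.
have iT12 : i \notin T12 by rewrite /T12 inE (negbTE iS).
rewrite cardS Hin //.
apply: (@arith_fin #|T12| #|T3| #|A1| (lam i) (x i) P (\sum_(k in T12) lam k)).
- by rewrite cardT12 leq_add2l.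
- exact: HxP.
- by rewrite cardT12 leq_addr.
- exact: IH12.
- rewrite sumS sumT12 sumT12'; lia.
Qed.

Lemma core n m (p : 'I_n -> nat) (P : nat) (a a' : {ffun 'I_n -> option 'I_m})
    (LJ : seq 'I_n) (LM : seq 'I_m) (zo : option 'I_m) :
  (forall l, (p l <= P)%N) ->
  uniq LJ -> sorted (fun x y => p y <= p x)%N LJ ->
  uniq LM -> sorted (fun i j => load p a i <= load p a j)%N LM ->
  (size LM <= size LJ)%N ->
  (forall l, l \in LJ -> a l = None) ->
  (forall k k', k \in LM -> k' \notin LM -> Some k' != zo ->
     (load p a k <= load p a k')%N) ->
  a' = [ffun l => if l \in take (size LM) LJ
                  then nth None (map Some LM) (index l LJ) else a l] ->
  Inv P (load p a) -> Inv P (load p a').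
Proof.
move=> pP uJ sJ uM sM sz fresh Hz -> IH.
have LS k := @load_step n m p a LJ LM k uJ uM sz fresh.
apply: (@inv_step m P (load p a) _ (fun k => nth 0 (map p LJ) (index k LM)) LM zo) => //.
- move=> k k' kM k'M le.
  have := @sorted_leq_nth _ (fun i j => load p a i <= load p a j)%N
     (fun x y z => @leq_trans _ _ _) (fun x => leqnn _) k LM sM (index k LM) (index k' LM).
  by rewrite !inE !index_mem !nth_index //; apply.
- by move=> k kM; rewrite LS (negbTE kM) addn0.
- by move=> k kM; rewrite LS kM.
- move=> k _; case: (ltnP (index k LM) (size (map p LJ))) => h.
    by have /mapP[l _ ->] := mem_nth 0 h.
  by rewrite nth_default.
- move=> k k' kM k'M le.
  have sJ' : sorted (fun x y => y <= x)%N (map p LJ) by rewrite sorted_map.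
  have := @sorted_leq_nth _ (fun x y => y <= x)%N
     (fun x y z h1 h2 => leq_trans h2 h1) (fun x => leqnn _) 0 _ sJ' (index k LM) (index k' LM).
  rewrite !inE size_map; apply => //.
    by apply: leq_trans sz; rewrite index_mem.
  by apply: leq_trans sz; rewrite index_mem.
Qed.

Lemma step_inv n m (p : 'I_n -> nat) (P : nat) (a a' : {ffun 'I_n -> option 'I_m})
    (B : {set 'I_n}) (pu : option 'I_n) :
  (forall l, (p l <= P)%N) ->
  (forall l, l \in B -> a l != None -> pu = Some l) ->
  greedy_step p a a' B pu ->
  Inv P (load p a) -> Inv P (load p a') /\ (forall l, a' l != None -> a l != None \/ l \in B).
Proof.
move=> pP fr [LJ [LM [pJ sJ [uM szM minM] sM Ha']]] IH.
have uJ : uniq LJ by rewrite (perm_uniq pJ) enum_uniq.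
have memJ : LJ =i B by move=> l; rewrite (perm_mem pJ) mem_enum.
have szJ : size LJ = #|B| by rewrite (perm_size pJ) cardE.
have trL : transitive (fun i j => load p a i <= load p a j)%N by move=> x y z; exact: leq_trans.
have supp : forall LJ' LM', {subset LJ' <= LJ} ->
    a' = [ffun l => if l \in take (size LM') LJ'
                  then nth None (map Some LM') (index l LJ') else a l] ->
    forall l, a' l != None -> a l != None \/ l \in B.
  move=> LJ' LM' sub -> l; rewrite ffunE; case: ifP => [lt _|_]; last by left.
  by right; rewrite -memJ; apply: sub; exact: mem_take lt.
have plain : (forall l, l \in LJ -> a l = None) ->
    a' = [ffun l => if l \in take (size LM) LJ
                  then nth None (map Some LM) (index l LJ) else a l] ->
    Inv P (load p a') /\ (forall l, a' l != None -> a l != None \/ l \in B).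
  move=> frJ ea'; split; last exact: (supp LJ LM).
  apply: (@core n m p P a a' LJ LM None pP uJ sJ uM sM _ frJ _ ea' IH).
    by rewrite szM szJ.
  by move=> k k' kM k'M _; exact: minM.
move: Ha'; case: pu fr => [u|] fr; last first.
  move=> /= Ha'; apply: plain Ha' => l lJ; apply/eqP; apply/negP => /negP h.
  by move: (fr l); rewrite -memJ => /(_ lJ h).
case au: (a u) => [M'|] /= Ha'; last first.
  apply: plain Ha' => l lJ; apply/eqP; apply/negP => /negP h.
  by move: (fr l); rewrite -memJ => /(_ lJ h) [e]; move: h; rewrite -e au.
have uJ' := rem_uniq u uJ.
have sJ' : sorted (fun x y => p y <= p x)%N (rem u LJ).
  apply: subseq_sorted (rem_subseq u LJ) sJ => x y z h1 h2; exact: leq_trans h2 h1.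
have frJ' : forall l, l \in rem u LJ -> a l = None.
  move=> l; rewrite (mem_rem_uniq _ uJ) inE => /andP[lu lJ]; apply/eqP; apply/negP => /negP h.
  by move: (fr l); rewrite -memJ => /(_ lJ h) [e]; move: lu; rewrite e eqxx.
have szJ' : ((size LJ).-1 <= size (rem u LJ))%N.
  case: (boolP (u \in LJ)) => uL; first by rewrite size_rem.
  by rewrite rem_id // leq_pred.
split; last first.
  by apply: (supp _ _ (@mem_rem _ u LJ)) Ha'.
move: Ha'; case: ifP => M'L Ha'.
  apply: (@core n m p P a a' (rem u LJ) (rem M' LM) (Some M') pP uJ' sJ' (rem_uniq _ uM) _ _ frJ' _ Ha' IH).
  - exact: subseq_sorted (rem_subseq _ _) sM.
  - by rewrite size_rem // szM -szJ.
  - move=> k k' kM k'M ne; apply: minM; first exact: mem_rem kM.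
    apply: contra k'M => k'L; rewrite (mem_rem_uniq _ uM) inE k'L andbT.
    by apply: contra ne => /eqP ->.
apply: (@core n m p P a a' (rem u LJ) (take (size LM).-1 LM) (Some (nth M' LM (size LM).-1)) pP uJ' sJ' (take_uniq _ uM) _ _ frJ' _ Ha' IH).
- exact: subseq_sorted (take_subseq _ _) sM.
- by rewrite size_take_min szM -szJ geq_min szJ'.
- move=> k k' kM k'M ne; apply: minM; first exact: mem_take kM.
  apply/negP => k'L; move: k'M; rewrite in_take // -leqNgt => le.
  have ilt : (index k' LM < size LM)%N by rewrite index_mem.
  have e : index k' LM = (size LM).-1 by move: le ilt; clear; case: (size LM) => //= s; lia.
  by move: ne; rewrite -e nth_index // eqxx.
Qed.
Lemma mem_bo n (s : seq (bcnode n)) X : X \in block_order s -> inl X \in s.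
Proof.
rewrite /block_order mem_pmap => /mapP [[B|v] xs] //= [->]; exact: xs.
Qed.

Lemma bo_uniq n (s : seq (bcnode n)) : uniq s -> uniq (block_order s).
Proof.
apply: (pmap_uniq (g := fun B => inl B)) => -[B|v] //.
Qed.

Lemma bo_index n (s : seq (bcnode n)) i1 i2 : uniq s ->
  (i1 < i2)%N -> (i2 < size (block_order s))%N ->
  (index (inl (nth set0 (block_order s) i1)) s < index (inl (nth set0 (block_order s) i2)) s)%N.
Proof.
elim: s i1 i2 => [|x s IHs] i1 i2 //= /andP[xs us].
have memn : forall i, (i < size (block_order s))%N -> inl (nth set0 (block_order s) i) \in s.
  by move=> i hi; apply: mem_bo; exact: mem_nth.
have neq : forall i, (i < size (block_order s))%N -> (x == inl (nth set0 (block_order s) i)) = false.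
  move=> i hi; apply/negbTE; apply: contra xs => /eqP ->; exact: memn.
case: x xs neq => [B|v] xs neq /=.
  case: i1 i2 => [|i1] [|i2] //= lt lt2.
    by rewrite eqxx (neq _ lt2).
  by rewrite (neq _ lt2) (neq _ (ltn_trans lt lt2)) ltnS; apply: IHs.
move=> lt lt2; exact: IHs.
Qed.

Lemma graph_fresh n (e : rel 'I_n) par s j' j l :
  rooting e par -> preorder e par s -> (j' < j)%N -> (j < size (block_order s))%N ->
  l \in nth set0 (block_order s) j' -> l \in nth set0 (block_order s) j ->
  parent_cv par (nth set0 (block_order s) j) = Some l.
Proof.
move=> [_ H2 _] [us mems Hpre] ltj lj l1 l2.
set bo := block_order s in lj l1 l2 *.
set B1 := nth set0 bo j' in l1 *; set B2 := nth set0 bo j in l2 *.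
have lj' := ltn_trans ltj lj.
have B1in : inl B1 \in s by apply: mem_bo; exact: mem_nth.
have B2in : inl B2 \in s by apply: mem_bo; exact: mem_nth.
have neqB : B1 != B2.
  by rewrite /B1 /B2 nth_uniq ?bo_uniq // neq_ltn ltj.
have v1 : bc_valid e (inl B1) by rewrite -mems.
have v2 : bc_valid e (inl B2) by rewrite -mems.
have cv : bc_valid e (inr l).
  rewrite /= /cutv.
  have sub : [set B1; B2] \subset [set B : {set 'I_n} | block e B && (l \in B)].
    apply/subsetP => B; rewrite !inE => /orP[] /eqP ->; apply/andP; split => //.
  by apply: leq_trans (subset_leq_card sub); rewrite cards2 neqB.
case: (H2 (inl B2) (inr l) v2 cv l2) => h2.
  by rewrite /parent_cv h2.
case: (H2 (inl B1) (inr l) v1 cv l1) => h1; last first.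
  by move: h1; rewrite h2 => -[] e12; move: neqB; rewrite e12 eqxx.
have desc : descendant par (inl B2) (inl B1) by exists 2; rewrite /= h1 /= h2.
have [Hf _] := Hpre (inl B2) B2in.
have := Hf (index (inl B1) s); rewrite index_mem nth_index // => /(_ B1in desc).
by rewrite leqNgt (@bo_index n s j' j us ltj lj).
Qed.

Lemma run_inv n m (e : rel 'I_n) (p : 'I_n -> nat) par s
    (st : nat -> {ffun 'I_n -> option 'I_m}) (P : nat) :
  rooting e par -> preorder e par s -> greedy_run p par s st ->
  (forall l, (p l <= P)%N) ->
  forall j, (j <= size (block_order s))%N ->
    Inv P (load p (st j)) /\
    (forall l, st j l != None -> exists2 j', (j' < j)%N & l \in nth set0 (block_order s) j').
Proof.
move=> hr hs [h0 hstep] pP; elim => [|j IH] hj.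
  have L0 : forall i, load p (st 0) i = 0%N.
    by move=> i; rewrite /load big1 // => l; rewrite h0 ffunE.
  split; last by move=> l; rewrite h0 ffunE.
  by move=> i S _; rewrite L0 muln0.
have [Ij Sj] := IH (ltnW hj).
have fr : forall l, l \in nth set0 (block_order s) j -> st j l != None ->
    parent_cv par (nth set0 (block_order s) j) = Some l.
  move=> l lB /Sj [j' lt lB'].
  exact: (@graph_fresh n e par s j' j l hr hs lt hj lB' lB).
have [I' S'] := @step_inv n m p P (st j) (st j.+1) _ _ pP fr (hstep j hj) Ij.
split => // l /S' [/Sj [j' lt lB]|lB].
  by exists j' => //; exact: ltnW.
by exists j.
Qed.

Lemma final_nat (m L R P : nat) :
  (m.-1.-1 * L <= R + m.-1.-1 * P)%N ->
  (m * L <= L + R + maxn (L + R) (m * P))%N.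
Proof.
case: m => [|[|[|k]]] /= h.
- by [].
- lia.
- lia.
case: (leqP (k.+3 * P) (L + R)) => hc.
  have : (k.+3 * (k.+1 * L) <= k.+3 * R + k.+1 * (k.+3 * P))%N.
    by rewrite [X in (_ <= _ + X)%N]mulnCA -mulnDr leq_pmul2l.
  nia.
have : (k.+2 * (k.+1 * L) <= k.+2 * R + k.+1 * (k.+2 * P))%N.
  by rewrite [X in (_ <= _ + X)%N]mulnCA -mulnDr leq_pmul2l.
nia.
Qed.

Local Open Scope ring_scope.

Theorem lemma1 (n m : nat) (e : rel 'I_n) (p : 'I_n -> nat)
    (e_sym : symmetric e) (e_irr : irreflexive e)
    (hbg : block_graph e)
    (homega : forall S : {set 'I_n}, clique e S -> (#|S| <= m)%N)
    (par : bcnode n -> option (bcnode n)) (hpar : rooting e par)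
    (s : seq (bcnode n)) (hs : preorder e par s)
    (st : nat -> {ffun 'I_n -> option 'I_m}) (hrun : greedy_run p par s st) :
  forall (i : 'I_m) (j : nat), (j <= size (block_order s))%N ->
    let Cj : rat := (\sum_(i0 < m) load p (st j) i0)%:R / m%:R in
    (load p (st j) i)%:R <= Cj + Num.max Cj (\max_(l < n) p l)%:R.
Proof.
move=> i j hj /=.
set P := (\max_(l < n) p l)%N.
have pP : forall l, (p l <= P)%N by move=> l; exact: leq_bigmax.
have [I _] := @run_inv n m e p par s st P hpar hs hrun pP j hj.
set lam := load p (st j) in I *.
set L := lam i.
set R := (\sum_(k < m | k != i) lam k)%N.
have eT : (\sum_(i0 < m) lam i0 = L + R)%N by rewrite (bigD1 i).
have key : (m * L <= L + R + maxn (L + R) (m * P))%N.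
  apply: final_nat.
  have := I i [set~ i]; rewrite in_setC1 eqxx cardsC1 card_ord => /(_ isT).
  congr (_ <= _ + _)%N; apply: eq_bigl => k; by rewrite in_setC1.
have mpos : (0 : rat) < m%:R by rewrite ltr0n (leq_ltn_trans (leq0n i) (ltn_ord i)).
rewrite eT.
case: (leqP (m * P) (L + R)) => hc.
  rewrite (maxn_idPl hc) in key.
  apply: (@le_trans _ _ ((L + R)%:R / m%:R + (L + R)%:R / m%:R)).
    by rewrite -mulrDl -natrD ler_pdivlMr // -natrM ler_nat mulnC.
  by rewrite lerD2l le_max lexx.
rewrite (maxn_idPr (ltnW hc)) in key.
apply: (@le_trans _ _ ((L + R)%:R / m%:R + P%:R)).
  rewrite -[P%:R](@mulfK _ m%:R) ?gt_eqF // -mulrDl -natrM -natrD ler_pdivlMr //.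
  by rewrite -natrM ler_nat mulnC [(P * m)%N]mulnC.
by rewrite lerD2l le_max lexx orbT.
Qed.
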